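(* Consider the full-duplex (FD) single-stage relay selection (SRS) scheme described in the context, with $\varpi=1$, thresholds $\gamma_{th_j}=2^{R_{D_j}}-1$ for $j=1,2$, and power coefficients satisfying $0<a_1<a_2$, $a_1+a_2=1$, $a_2>a_1\gamma_{th_2}$. Then its diversity order is zero: $$-\lim_{\rho\to\infty}\frac{\log P_{SRS}^{FD}(\rho)}{\log\rho}=0 .$$
   Context: Network model. A base station (BS) is at the origin of the plane. There are $K\ge 1$ relays $R_1,\dots,R_K$ whose positions are i.i.d. uniformly distributed in the disc of radius $R_{\mathcal D}>0$ centred at the origin; $d_{SR_i}$ is the distance from the BS to $R_i$. Two users $D_1,D_2$ are at fixed points of the plane at distances $d_1,d_2>0$ from the BS, and $d_{R_iD_j}$ is the Euclidean distance between $R_i$ and $D_j$. Let $\alpha>0$ be the path loss exponent. The random variables $g_{SR_i}$, $g_{R_iD_1}$, $g_{R_iD_2}$ ($i=1,\dots,K$) are exponentially distributed with mean $1$ (squared magnitudes of $\mathcal{CN}(0,1)$ Rayleigh coefficients), $Z_i$ ($i=1,\dots,K$) is exponentially distributed with mean $\Omega_{LI}>0$ (loop-interference gain at $R_i$), and all of these are mutually independent and independent of the relay positions. Put $X_i=g_{SR_i}/(1+d_{SR_i}^\alpha)$ and $Y_{ji}=g_{R_iD_j}/(1+d_{R_iD_j}^\alpha)$. Let $\rho>0$ be the transmit SNR, $a_1,a_2$ power allocation coefficients, and $\varpi\in\{0,1\}$ the duplex factor. Define $\gamma_{D_2\to R_i}=\frac{\rho X_i a_2}{\rho X_i a_1+\rho\varpi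 Z_i+1}$, $\gamma_{D_1\to R_i}=\frac{\rho X_i a_1}{\rho\varpi Z_i+1}$, $\gamma^{(i)}_{D_2\to D_1}=\frac{\rho Y_{1i}a_2}{\rho Y_{1i}a_1+1}$, $\gamma^{(i)}_{D_1}=\rho Y_{1i}a_1$, $\gamma^{(i)}_{D_2}=\frac{\rho Y_{2i}a_2}{\rho Y_{2i}a_1+1}$. Target rates $R_{D_1},R_{D_2}>0$ are given; in FD mode $\varpi=1$ and $\gamma_{th_j}=2^{R_{D_j}}-1$; in HD mode $\varpi=0$ and $\gamma_{th_j}=2^{2R_{D_j}}-1$. SRS scheme: with $W_i=\min\{\gamma_{D_2\to R_i},\gamma^{(i)}_{D_2\to D_1},\gamma^{(i)}_{D_2}\}$, the outage probability is $P_{SRS}(\rho)=\Pr(\max_{1\le i\le K}W_i<\gamma_{th_2})$; $P_{SRS}^{FD}$ denotes it in FD mode. *)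

(* Defs.v *)
From HB Require Import structures.
From mathcomp Require Import all_boot all_order all_algebra.
From mathcomp Require Import all_classical all_reals all_analysis.
Set Implicit Arguments. Unset Strict Implicit. Unset Printing Implicit Defensive.
Import Order.TTheory GRing.Theory Num.Def Num.Theory.
Import numFieldNormedType.Exports.
Local Open Scope classical_set_scope.
Local Open Scope ring_scope.

Definition disc {R : realType} (RD : R) : set (R * R) :=
  [set p | p.1 ^+ 2 + p.2 ^+ 2 <= RD ^+ 2].

Definition unif_disc {R : realType} (RD : R) (A : set (R * R)) : \bar R :=
  ((@lebesgue_measure R \x @lebesgue_measure R) (A `&` disc RD)
     * ((pi * RD ^+ 2)^-1)%:E)%E.

Definition expo_mean {R : realType} (m : R) (B : set R) : \bar R :=
  exponential_prob (m^-1) B.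

Definition dist2 {R : realType} (p q : R * R) : R :=
  Num.sqrt ((p.1 - q.1) ^+ 2 + (p.2 - q.2) ^+ 2).

Definition plgain {R : realType} (alpha d : R) : R := (1 + d `^ alpha)^-1.

(* Random-variable model: K relays with i.i.d. uniform positions in the disc,
   unit-mean exponential small-scale gains g_SR, g_RD1, g_RD2, and loop
   interference Z with mean OmegaLI, all mutually independent.  Mutual
   independence together with the marginal laws is stated as the
   factorization of the joint law on all measurable rectangles. *)
Definition relay_model {R : realType} {d : measure_display} {T : measurableType d}
  (P : probability T R) (K : nat) (RD OmegaLI : R)
  (pos : 'I_K -> T -> R * R) (gSR gR1 gR2 Z : 'I_K -> T -> R) : Prop :=
  (forall i, measurable_fun setT (pos i)) /\
  (forall i, measurable_fun setT (gSR i)) /\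
  (forall i, measurable_fun setT (gR1 i)) /\
  (forall i, measurable_fun setT (gR2 i)) /\
  (forall i, measurable_fun setT (Z i)) /\
      forall (A : 'I_K -> set (R * R)) (B1 B2 B3 B4 : 'I_K -> set R),
        (forall i, measurable (A i)) -> (forall i, measurable (B1 i)) ->
        (forall i, measurable (B2 i)) -> (forall i, measurable (B3 i)) ->
        (forall i, measurable (B4 i)) ->
        P (\bigcap_(i in [set: 'I_K])
              [set w | [/\ A i (pos i w), B1 i (gSR i w), B2 i (gR1 i w),
                           B3 i (gR2 i w) & B4 i (Z i w)]])
        = (\prod_(i < K) (unif_disc RD (A i) * expo_mean 1 (B1 i)
                           * expo_mean 1 (B2 i) * expo_mean 1 (B3 i)
                           * expo_mean OmegaLI (B4 i)))%E.

Definition W_srs {R : realType} (rho a1 a2 varpi X Y1 Y2 Zi : R) : R :=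
  Num.min (rho * X * a2 / (rho * X * a1 + rho * varpi * Zi + 1))
    (Num.min (rho * Y1 * a2 / (rho * Y1 * a1 + 1))
             (rho * Y2 * a2 / (rho * Y2 * a1 + 1))).

(* Outage probability of the SRS scheme:
   Pr(max_i W_i < gth2), where the BS is at the origin and D1, D2 are at
   the points u1, u2 of the plane. *)
Definition P_SRS {R : realType} {d : measure_display} {T : measurableType d}
  (P : probability T R) (K : nat) (alpha : R) (u1 u2 : R * R)
  (pos : 'I_K -> T -> R * R) (gSR gR1 gR2 Z : 'I_K -> T -> R)
  (a1 a2 varpi gth2 rho : R) : \bar R :=
  P [set w | forall i : 'I_K,
       W_srs rho a1 a2 varpi
         (gSR i w * plgain alpha (dist2 (pos i w) (0, 0)))
         (gR1 i w * plgain alpha (dist2 (pos i w) u1))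
         (gR2 i w * plgain alpha (dist2 (pos i w) u2))
         (Z i w) < gth2].

(* Main.v *)
Require Import Defs.
From HB Require Import structures.
From mathcomp Require Import all_boot all_order all_algebra.
From mathcomp Require Import all_classical all_reals all_analysis.
From mathcomp Require Import measurable_realfun exponential_distribution.
From mathcomp Require Import lra.
Import Order.TTheory GRing.Theory Num.Def Num.Theory.
Import numFieldNormedType.Exports.
Local Open Scope classical_set_scope.
Local Open Scope ring_scope.

Lemma meas_inv (R : realType) : measurable_fun [set: R] (@GRing.inv R).
Proof.
rewrite (_ : GRing.inv = fun x : R => if x == 0 then 0 else x^-1); last first.
  by apply/funext => x; case: eqP => // ->; rewrite invr0.
apply: measurable_fun_if => //.
- apply: (measurable_fun_bool true); rewrite setTI.
  rewrite (_ : _ @^-1` _ = [set 0]); first exact: measurable_set1.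
  apply/seteqP; split => x /=.
    by move/eqP.
  by move=> ->; rewrite eqxx.
- rewrite setTI.
  apply: (@measurable_funS _ _ _ _ [set r : R | r != 0]).
  + exact: open_measurable.
  + by move=> x /= /negbT.
  + apply: open_continuous_measurable_fun => //; apply/in_setP => x /= x0.
    exact: inv_continuous.
Qed.

Section meas.
Context (R : realType) (d : measure_display) (T : measurableType d).
Implicit Types f g : T -> R.
Lemma mM f g : measurable_fun setT f -> measurable_fun setT g ->
  measurable_fun setT (fun w => f w * g w).
Proof. exact: measurable_funM. Qed.
Lemma mD f g : measurable_fun setT f -> measurable_fun setT g ->
  measurable_fun setT (fun w => f w + g w).
Proof. exact: measurable_funD. Qed.
Lemma mB f g : measurable_fun setT f -> measurable_fun setT g ->
  measurable_fun setT (fun w => f w - g w).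
Proof. exact: measurable_funB. Qed.
Lemma mV f : measurable_fun setT f -> measurable_fun setT (fun w => (f w)^-1).
Proof. move=> mf; exact: (measurableT_comp (meas_inv R) mf). Qed.
Lemma mX f n : measurable_fun setT f -> measurable_fun setT (fun w => f w ^+ n).
Proof. exact: measurable_funX. Qed.
Lemma mP f p : measurable_fun setT f -> measurable_fun setT (fun w => f w `^ p).
Proof. move=> mf; exact: (measurableT_comp (measurable_powR p) mf). Qed.
Lemma mS f : measurable_fun setT f -> measurable_fun setT (fun w => Num.sqrt (f w)).
Proof. move=> mf; apply: (measurableT_comp _ mf).
exact: continuous_measurable_fun (@sqrt_continuous R). Qed.
Lemma mMin f g : measurable_fun setT f -> measurable_fun setT g ->
  measurable_fun setT (fun w => Num.min (f w) (g w)).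
Proof. exact: measurable_minr. Qed.
Lemma mC (c : R) : measurable_fun setT (fun _ : T => c).
Proof. exact: measurable_cst. Qed.
Lemma m1 (p : T -> R * R) : measurable_fun setT p -> measurable_fun setT (fun w => (p w).1).
Proof. move=> mp; exact: (measurableT_comp measurable_fst mp). Qed.
Lemma m2 (p : T -> R * R) : measurable_fun setT p -> measurable_fun setT (fun w => (p w).2).
Proof. move=> mp; exact: (measurableT_comp measurable_snd mp). Qed.
End meas.

Lemma expo_setT (R : realType) (m : R) : 0 < m -> expo_mean m setT = 1%E.
Proof.
move=> m0; rewrite /expo_mean /exponential_prob.
by apply: integral_exponential_pdf; rewrite invr_gt0.
Qed.

Lemma expo_01 (R : realType) : (0 < expo_mean (1:R) `[0%R, 1%R])%E.
Proof.
rewrite /expo_mean invr1 exponential_prob_itv0c // mulN1r -EFinB lte_fin.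
by rewrite subr_gt0 expR_lt1 oppr_lt0.
Qed.

Lemma expo_tail (R : realType) (m M : R) : 0 < m -> 0 < M ->
  (0 < expo_mean m `[M, +oo[%classic)%E.
Proof.
move=> m0 M0; rewrite /expo_mean /exponential_prob.
set r := m^-1.
have r0 : 0 < r by rewrite invr_gt0.
have cexpNM : continuous (fun z : R^o => expR (- r * z)).
  move=> z; apply: continuous_comp; last exact: continuous_expR.
  by apply: continuousM => //; apply: (@continuousN _ R^o); exact: cst_continuous.
rewrite (@ge0_continuous_FTC2y _ _ (fun x => - expR (- r * x)) M 0).
- by rewrite sub0e EFinN oppeK lte_fin expR_gt0.
- by move=> x _; apply: exponential_pdf_ge0; exact: ltW.
- apply: (@continuous_subspaceW R^o _ _ [set` `[0, +oo[%R]).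
    move=> x /=; rewrite !in_itv /= !andbT => Mx.
    exact: le_trans (ltW M0) Mx.
  exact: within_continuous_exponential_pdf.
- rewrite -oppr0; apply: cvgN.
  rewrite (_ : (fun x => expR (- r * x)) =
               (fun z => expR (- z)) \o (fun z => r * z)); last first.
    by apply: eq_fun => x; rewrite mulNr.
  apply: (@cvg_comp _ _ _ _ _ _ (pinfty_nbhs R)); last exact: cvgr_expR.
  exact: gt0_cvgMry.
- by move=> z _; exact: ex_derive.
- by apply: cvgN; apply/cvg_at_right_filter; exact: cexpNM.
- move=> x; rewrite in_itv /= andbT => Mx.
  apply: derive1_exponential_pdf; rewrite in_itv /= andbT.
  exact: lt_trans M0 Mx.
Qed.

Lemma meas_forall (d : measure_display) (T : measurableType d)
  (I : finType) (F : I -> set T) :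
  (forall i, measurable (F i)) -> measurable [set w | forall i, F i w].
Proof.
move=> mF.
rewrite (_ : [set w | forall i, F i w] = \bigcap_(i in [set: I]) F i).
  by apply: fin_bigcap_measurable => // i _; exact: mF.
by apply/seteqP; split => w /= h i //; apply: h.
Qed.

Lemma plgain_bnd (R : realType) (al dd : R) : 0 < plgain al dd <= 1.
Proof.
rewrite /plgain; have h : 0 < 1 + dd `^ al by rewrite ltr_pwDl ?powR_ge0.
rewrite invr_gt0 h /= invf_le1 //; by rewrite lerDl powR_ge0.
Qed.

Theorem mainTheorem1 (R : realType) (d : measure_display) (T : measurableType d)
  (P : probability T R) (K : nat) (RD OmegaLI alpha : R) (u1 u2 : R * R)
  (pos : 'I_K -> T -> R * R) (gSR gR1 gR2 Z : 'I_K -> T -> R)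
  (RD1 RD2 a1 a2 : R) :
  (1 <= K)%N -> 0 < RD -> 0 < OmegaLI -> 0 < alpha ->
  0 < dist2 u1 (0, 0) -> 0 < dist2 u2 (0, 0) ->
  relay_model P RD OmegaLI pos gSR gR1 gR2 Z ->
  0 < RD1 -> 0 < RD2 ->
  let gth1 := 2 `^ RD1 - 1 in
  let gth2 := 2 `^ RD2 - 1 in
  0 < a1 -> a1 < a2 -> a1 + a2 = 1 -> a2 > a1 * gth2 ->
  (- (ln (fine (P_SRS P alpha u1 u2 pos gSR gR1 gR2 Z a1 a2 1 gth2 rho))
        / ln rho)) @[rho --> +oo] --> 0.
Proof.
move=> K1 RD0 Om0 al0 du1 du2 [mpos [mgSR [mgR1 [mgR2 [mZ Hf]]]]] R10 R20
  gth1 gth2 a10 a12 a1a2 ha2.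
have a20 : 0 < a2 by apply: lt_trans a12.
have g20 : 0 < gth2.
  rewrite /gth2 subr_gt0.
  have -> : (2 : R) = expR (ln 2) by rewrite lnK // posrE.
  by rewrite -expRM expR_gt1 mulr_gt0 // ln_gt0 // ltr1n.
set M := 2 * a2 / gth2.
have M0 : 0 < M by rewrite /M divr_gt0 // mulr_gt0.
have i0 : 'I_K := Ordinal K1.
set Rect := \bigcap_(i in [set: 'I_K]) [set w | [/\ [set: R * R] (pos i w),
   `[0%R, 1%R]%classic (gSR i w), [set: R] (gR1 i w), [set: R] (gR2 i w)
   & `[M, +oo[%classic (Z i w)]].
have mRect : measurable Rect.
  apply: fin_bigcap_measurable; first exact: finite_finset.
  move=> i _.
  rewrite (_ : [set w | _] = gSR i @^-1` `[0%R, 1%R]%classic `&` Z i @^-1` `[M, +oo[%classic).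
    apply: measurableI.
      by have := mgSR i measurableT _ (measurable_itv `[0%R, 1%R]); rewrite setTI.
    by have := mZ i measurableT _ (measurable_itv `[M, +oo[); rewrite setTI.
  apply/seteqP; split => w /=; first by case.
  by case=> h1 h4; split.
have PR : (0 < P Rect)%E.
  have HR : P Rect = (\prod_(i < K) (unif_disc RD setT * expo_mean 1 `[0%R, 1%R]%classic
      * expo_mean 1 setT * expo_mean 1 setT * expo_mean OmegaLI `[M, +oo[%classic))%E.
    by apply: Hf => // i; apply: measurable_itv.
  have H1 : P setT = (\prod_(i < K) (unif_disc RD setT * expo_mean 1 setT
      * expo_mean 1 setT * expo_mean 1 setT * expo_mean OmegaLI setT))%E.
    rewrite -(Hf (fun=> setT) (fun=> setT) (fun=> setT) (fun=> setT) (fun=> setT)) //.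
    by congr (P _); apply/seteqP; split => w // _ i _.
  rewrite probability_setT !expo_setT // !mule1 in H1.
  have u0 : (0 < unif_disc RD setT)%E.
    rewrite lt_neqAle; apply/andP; split.
      apply/eqP => u0; move: H1; rewrite (bigD1 i0) //= -u0 mul0e.
      by move/eqP; rewrite onee_eq0.
    rewrite /unif_disc; apply: mule_ge0; first exact: measure_ge0.
    by rewrite lee_fin invr_ge0 mulr_ge0 // ?pi_ge0 // sqr_ge0.
  rewrite HR; apply: (big_ind (fun x => 0 < x)%E) => //.
    by move=> x y; apply: mule_gt0.
  move=> i _; rewrite expo_setT //; rewrite !mule1.
  by apply: mule_gt0; [apply: mule_gt0 => //; exact: expo_01 | exact: expo_tail].
have bnd : forall rho, 0 < rho ->
  fine (P Rect) <= fine (P_SRS P alpha u1 u2 pos gSR gR1 gR2 Z a1 a2 1 gth2 rho) <= 1.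
  move=> rho rho0; rewrite /P_SRS.
  set E := [set w | _].
  have mE : measurable E.
    apply: meas_forall => i.
    pose W := (fun w => W_srs rho a1 a2 1 (gSR i w * plgain alpha (dist2 (pos i w) (0, 0)))
       (gR1 i w * plgain alpha (dist2 (pos i w) u1))
       (gR2 i w * plgain alpha (dist2 (pos i w) u2)) (Z i w)).
    have mW : measurable_fun setT W.
      rewrite /W /W_srs /plgain /dist2.
      repeat first [ apply: mMin | apply: mM | apply: mD | apply: mB | apply: mV
                   | apply: mX | apply: mP | apply: mS | apply: mC
                   | apply: m1 | apply: m2 | apply: mpos | apply: mgSR
                   | apply: mgR1 | apply: mgR2 | apply: mZ ].
    have := measurable_fun_ltr mW (@mC _ _ T gth2) measurableT (Y := [set true]) _.
    by rewrite setTI; apply.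
  have sub : Rect `<=` E.
    move=> w Rw i; have [_ h1 _ _ h4] := Rw i I.
    move: h1 h4 => /= h1 h4.
    rewrite in_itv /= in h1; rewrite in_itv /= andbT in h4.
    case/andP: h1 => g0 g1.
    rewrite /W_srs gt_min; apply/orP; left.
    have [pg0 pg1] := andP (@plgain_bnd R alpha (dist2 (pos i w) (0, 0))).
    set X := gSR i w * _.
    have X0 : 0 <= X by rewrite mulr_ge0 // ltW.
    have X1 : X <= 1 by rewrite /X; nra.
    have Z0 : 0 < Z i w by apply: lt_le_trans h4.
    have hZ : 2 * a2 <= Z i w * gth2 by rewrite -ler_pdivrMr.
    rewrite ltr_pdivrMr; last first.
      by rewrite ltr_pwDr // addr_ge0 // ?mulr_ge0 // ltW.
    have e1 : rho * X * a2 <= rho * a2.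
      by rewrite -mulrA ler_pM2l // ler_piMl // ltW.
    have e2 : rho * (2 * a2) <= rho * (Z i w * gth2) by rewrite ler_pM2l.
    have e3 : 0 <= gth2 * (rho * X * a1) by rewrite !mulr_ge0 // ltW.
    have e4 : 0 < rho * a2 by rewrite mulr_gt0.
    lra.
  have PRE : (P Rect <= P E)%E by apply: le_measure; rewrite ?inE.
  have fR : P Rect \is a fin_num.
    by rewrite ge0_fin_numE // (le_lt_trans (probability_le1 P mRect)) // ltry.
  have fE : P E \is a fin_num.
    by rewrite ge0_fin_numE // (le_lt_trans (probability_le1 P mE)) // ltry.
  apply/andP; split; first exact: fine_le.
  by have := fine_le fE (fin_numE 1) (probability_le1 P mE).
set c := fine (P Rect).
have c0 : 0 < c.
  apply: fine_gt0; rewrite PR /=.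
  exact: le_lt_trans (probability_le1 P mRect) (ltry _).
apply/cvgr0Pnorm_lt => e e0.
exists (Num.max 1 (expR (- ln c / e))); split; first by rewrite num_real.
move=> rho; rewrite gt_max => /andP [r1 rE].
have rho0 : 0 < rho by apply: lt_trans r1.
have /andP [hc h1] := bnd rho rho0.
set p := fine (P_SRS _ _ _ _ _ _ _ _ _ _ _ _ _ _) in hc h1 *.
have p0 : 0 < p by apply: (lt_le_trans c0 hc).
have lnp0 : ln p <= 0 by apply: ln_le0.
have lncp : ln c <= ln p by rewrite ler_ln ?posrE.
have lr : 0 < ln rho by apply: ln_gt0.
have lrE : - ln c / e < ln rho.
  by rewrite -ltr_ln ?posrE ?expR_gt0 // expRK in rE.
rewrite ltr_pdivrMr // in lrE.
rewrite normrN ler0_norm; last by rewrite mulr_le0_ge0 // invr_ge0 ltW.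
rewrite -mulNr ltr_pdivrMr //.
lra.
Qed.
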